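(* For any $n\times n$ completely positive semidefinite matrix $X$, $$\mathrm{cpsd}\text{-}\mathrm{rank}(X)\ge \frac{\left(\sum_{i=1}^n\sqrt{X_{ii}}\right)^2}{\sum_{i,j=1}^n X_{ij}}.$$
   Context: An $n\times n$ matrix $X$ is completely positive semidefinite (cpsd) if there exist $d\ge1$ and Hermitian positive semidefinite $d\times d$ matrices $P_1,\dots,P_n$ with $X_{ij}=\mathrm{Tr}(P_iP_j)$ for all $i,j$; the cpsd-rank of $X$ is the least such $d$. *)

(* Defs.v *)
From HB Require Import structures.
From mathcomp Require Import all_boot all_order all_algebra.
From mathcomp Require Import complex.
From mathcomp Require Import boolp reals.

Set Implicit Arguments.
Unset Strict Implicit.
Unset Printing Implicit Defensive.

Import Order.TTheory GRing.Theory Num.Theory.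
Local Open Scope ring_scope.

Definition adjmx (R : realType) (m n : nat) (A : 'M[R[i]]_(m, n)) : 'M[R[i]]_(n, m) :=
  map_mx Num.conj (A^T).

Definition hermitian_psd (R : realType) (d : nat) (P : 'M[R[i]]_d) : Prop :=
  adjmx P = P /\ forall v : 'cV[R[i]]_d, 0 <= (adjmx v *m P *m v) 0 0.

Definition cpsd_factorization (R : realType) (n : nat) (X : 'M[R]_n) (d : nat) : Prop :=
  exists P : 'I_n -> 'M[R[i]]_d,
    (forall i, hermitian_psd (P i)) /\
    (forall i j, ((X i j)%:C)%C = \tr (P i *m P j)).

Definition is_cpsd (R : realType) (n : nat) (X : 'M[R]_n) : Prop :=
  exists d, (1 <= d)%N /\ cpsd_factorization X d.

Definition cpsd_rank (R : realType) (n : nat) (X : 'M[R]_n) (hX : is_cpsd X) : nat :=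
  ex_minn (P := fun d => `[< (1 <= d)%N /\ cpsd_factorization X d >])
    (let: ex_intro d hd := hX in ex_intro _ d (asboolT hd)).

(* Main.v *)
Require Import Defs.
From HB Require Import structures.
From mathcomp Require Import all_boot all_order all_algebra.
From mathcomp Require Import complex.
From mathcomp Require Import boolp reals.
From mathcomp Require Import ring lra.
Import Order.TTheory GRing.Theory Num.Theory.
Set Implicit Arguments.
Unset Strict Implicit.
Local Open Scope ring_scope.

Section H.
Variable R : realType.
Local Notation Rc := (@complex.Re R).
Local Notation Ic := (@complex.Im R).

Lemma ReD (z w : R[i]) : Rc (z + w) = Rc z + Rc w.
Proof. by case: z => a b; case: w => c e. Qed.
Lemma ImD (z w : R[i]) : Ic (z + w) = Ic z + Ic w.
Proof. by case: z => a b; case: w => c e. Qed.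
Lemma ReM (z w : R[i]) : Rc (z * w) = Rc z * Rc w - Ic z * Ic w.
Proof. by case: z => a b; case: w => c e. Qed.
Lemma ImM (z w : R[i]) : Ic (z * w) = Rc z * Ic w + Ic z * Rc w.
Proof. by case: z => a b; case: w => c e. Qed.
Lemma ReJ (z : R[i]) : Rc (Num.conj z) = Rc z.
Proof. by case: z => a b. Qed.
Lemma ImJ (z : R[i]) : Ic (Num.conj z) = - Ic z.
Proof. by case: z => a b. Qed.
Lemma Re0 : Rc 0 = 0. Proof. by []. Qed.
Lemma ReC (x : R) : Rc (x%:C)%C = x. Proof. by []. Qed.
Lemma ImC (x : R) : Ic (x%:C)%C = 0. Proof. by []. Qed.
Lemma ReN (z : R[i]) : Rc (- z) = - Rc z. Proof. by case: z. Qed.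
Lemma ImN (z : R[i]) : Ic (- z) = - Ic z. Proof. by case: z. Qed.

Lemma Re_sum (I : Type) (r : seq I) (P : pred I) (F : I -> R[i]) :
  Rc (\sum_(i <- r | P i) F i) = \sum_(i <- r | P i) Rc (F i).
Proof. exact: (big_morph Rc ReD Re0). Qed.

Lemma ge0C (z : R[i]) : (0 <= z) = (Ic z == 0) && (0 <= Rc z).
Proof. by rewrite lecE eq_sym. Qed.

Definition nsq (z : R[i]) := Rc z ^+ 2 + Ic z ^+ 2.

Lemma key2 (pkk pll pkl plk : R[i]) : plk = Num.conj pkl ->
  (forall al be : R[i], 0 <= Num.conj al * al * pkk + Num.conj al * be * pkl
      + Num.conj be * al * plk + Num.conj be * be * pll) ->
  nsq pkl <= Rc pkk * Rc pll.
Proof.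
move=> -> H.
case: pkk H => a a' ; case: pll => c c'; case: pkl => x y H.
have H1 := H 1 0; have H2 := H 0 1.
set N := x ^+ 2 + y ^+ 2.
have H3 := H (N%:C)%C (- (a%:C)%C * Num.conj (x +i* y)%C).
have H4 := H ((c+1)%:C)%C (- Num.conj (x +i* y)%C).
move: H1 H2 H3 H4; rewrite !ge0C /= => /andP[_ ha] /andP[_ hc] /andP[_ h3] /andP[_ h4].
rewrite /nsq /=.
have {}ha : 0 <= a by move: ha; nra.
have {}hc : 0 <= c by move: hc; nra.
have {}h3 : 0 <= a * N * (a * c - N) by move: h3; rewrite /N; nra.
have {}h4 : 0 <= a * (c+1)^+2 - N * (c + 2) by move: h4; rewrite /N; nra.
have hN : 0 <= N by rewrite /N; nra.
rewrite -/N.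
have [a0|apos] := eqVneq a 0.
  move: h4; rewrite a0 mul0r sub0r oppr_ge0 => h4.
  have : N = 0 by nra.
  by move=> ->; nra.
have {}apos : 0 < a by rewrite lt_neqAle eq_sym apos ha.
have [N0|Npos] := eqVneq N 0.
  by rewrite N0; nra.
have {}Npos : 0 < N by rewrite lt_neqAle eq_sym Npos hN.
have : 0 < a * N by nra.
move=> aN.
by rewrite -subr_ge0 -(pmulr_rge0 _ aN).
Qed.
Lemma adjE (m n : nat) (A : 'M[R[i]]_(m, n)) i j : adjmx A i j = Num.conj (A j i).
Proof. by rewrite /adjmx !mxE. Qed.

Lemma quadE d (P : 'M[R[i]]_d) (v : 'cV[R[i]]_d) :
  (adjmx v *m P *m v) 0 0 = \sum_a \sum_b Num.conj (v a 0) * P a b * v b 0.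
Proof.
rewrite !mxE exchange_big /=; apply: eq_bigr => b _.
rewrite !mxE mulr_suml; apply: eq_bigr => a _; by rewrite adjE.
Qed.

Lemma sum_dl d (k : 'I_d) (F : 'I_d -> R[i]) (c : R[i]) :
  \sum_a (c * (a == k)%:R) * F a = c * F k.
Proof.
rewrite (bigD1 k) //= eqxx mulr1 big1 ?addr0 // => a /negbTE ->.
by rewrite mulr0 mul0r.
Qed.

Lemma sum_dr d (k : 'I_d) (F : 'I_d -> R[i]) (c : R[i]) :
  \sum_a F a * (c * (a == k)%:R) = F k * c.
Proof.
rewrite (bigD1 k) //= eqxx mulr1 big1 ?addr0 // => a /negbTE ->.
by rewrite mulr0 mulr0.
Qed.

Lemma form2 d (P : 'M[R[i]]_d) k l (al be : R[i]) :
  let v : 'cV_d := \col_m (al * (m == k)%:R + be * (m == l)%:R) in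
  (adjmx v *m P *m v) 0 0 = Num.conj al * al * P k k + Num.conj al * be * P k l
      + Num.conj be * al * P l k + Num.conj be * be * P l l.
Proof.
move=> v; rewrite quadE.
under eq_bigr => a _.
  under eq_bigr => b _ do rewrite /v !mxE mulrDr.
  rewrite big_split /= sum_dr sum_dr.
  over.
rewrite /= big_split /= -!mulr_suml.
have E : forall F : 'I_d -> R[i], \sum_a Num.conj (al * (a == k)%:R + be * (a == l)%:R) * F a
   = Num.conj al * F k + Num.conj be * F l.
  move=> F; under eq_bigr => a _ do rewrite rmorphD !rmorphM /= !rmorph_nat mulrDl.
  by rewrite big_split /= !sum_dl.
rewrite (E (fun a => P a k)) (E (fun a => P a l)) /=.
ring.
Qed.

Lemma herm_entry d (P : 'M[R[i]]_d) : adjmx P = P -> forall k l, P l k = Num.conj (P k l).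
Proof. by move=> hP k l; rewrite -{1}hP adjE. Qed.

Lemma psd_key d (P : 'M[R[i]]_d) : hermitian_psd P -> forall k l,
  nsq (P k l) <= Rc (P k k) * Rc (P l l).
Proof.
move=> [hh hq] k l; apply: key2; first exact: herm_entry.
move=> al be; rewrite -form2; exact: hq.
Qed.

Lemma psd_diag d (P : 'M[R[i]]_d) : hermitian_psd P -> forall k,
  0 <= Rc (P k k) /\ Ic (P k k) = 0.
Proof.
move=> hP k; have := hP.2 (\col_m (1 * (m == k)%:R + 0 * (m == k)%:R)).
rewrite form2 ge0C => /andP[/eqP hi hr]; move: hi hr.
rewrite !(rmorph1, rmorph0, mul1r, mul0r, mulr0, addr0) //.
Qed.
Lemma cs d (x : 'I_d -> R) : (\sum_k x k) ^+ 2 <= d%:R * \sum_k x k ^+ 2.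
Proof.
have H : 0 <= \sum_k \sum_l (x k - x l) ^+ 2 by do 2 (apply: sumr_ge0 => ? _); exact: sqr_ge0.
have E : \sum_k \sum_l (x k - x l) ^+ 2 =
   \sum_k \sum_l (x k ^+ 2 + x l ^+ 2 - 2 * (x k * x l)).
  by do 2 (apply: eq_bigr => ? _); ring.
move: H; rewrite E.
under eq_bigr => k _ do rewrite sumrB big_split /= sumr_const card_ord -mulr_sumr -mulr_sumr.
rewrite sumrB big_split /= sumrMnl sumr_const card_ord -mulr_sumr -mulr_suml -expr2 => H.
rewrite -subr_ge0.
have -> : d%:R * \sum_k x k ^+ 2 - (\sum_k x k) ^+ 2 =
   ((\sum_k x k ^+ 2) *+ d + (\sum_k x k ^+ 2) *+ d - 2 * (\sum_k x k) ^+ 2) / 2.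
  set S2 := \sum_k _; set S := \sum_k _.
  by rewrite -[S2 *+ d]mulr_natr; field.
apply: divr_ge0; [exact: H | by []].
Qed.

Lemma tr_mul d (A B : 'M[R[i]]_d) : \tr (A *m B) = \sum_k \sum_l A k l * B l k.
Proof. by rewrite /mxtrace; apply: eq_bigr => k _; rewrite mxE. Qed.

Lemma nsqE (z : R[i]) : Rc (z * Num.conj z) = nsq z.
Proof. by rewrite ReM ReJ ImJ /nsq; ring. Qed.

Lemma nsq_ge (z : R[i]) : Rc z ^+ 2 <= nsq z.
Proof. rewrite /nsq lerDl; exact: sqr_ge0. Qed.
End H.

Theorem theorem3p8 (R : realType) (n : nat) (X : 'M[R]_n) (hX : is_cpsd X) :
  (\sum_(i < n) Num.sqrt (X i i)) ^+ 2 / (\sum_(i < n) \sum_(j < n) X i j)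
    <= (cpsd_rank hX)%:R.
Proof.
rewrite /cpsd_rank; case: ex_minnP => d /asboolP [hd [P [hP hX']]] _.
have Xe i j : X i j = \sum_k \sum_l complex.Re (P i k l * P j l k).
  by rewrite -[X i j]ReC hX' tr_mul Re_sum; apply: eq_bigr => k _; rewrite Re_sum.
pose t i := \sum_k complex.Re (P i k k).
have t0 i : 0 <= t i by apply: sumr_ge0 => k _; exact: (psd_diag (hP i) k).1.
have Xii i : X i i <= t i ^+ 2.
  rewrite Xe /t expr2 mulr_suml; apply: ler_sum => k _; rewrite mulr_sumr.
  apply: ler_sum => l _.
  rewrite (herm_entry (hP i).1 k l) nsqE; exact: psd_key.
pose S k l := \sum_i P i k l.
pose s k := \sum_i complex.Re (P i k k).
have SX : \sum_i \sum_j X i j = \sum_k \sum_l nsq (S k l).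
  have -> : \sum_i \sum_j X i j = \sum_k \sum_l complex.Re (S k l * S l k).
    under eq_bigr => i _ do under eq_bigr => j _ do rewrite Xe.
    under eq_bigr => i _ do rewrite exchange_big.
    rewrite exchange_big; apply: eq_bigr => k _.
    under eq_bigr => i _ do rewrite exchange_big.
    rewrite exchange_big; apply: eq_bigr => l _.
    rewrite /S mulr_suml Re_sum; apply: eq_bigr => i _.
    by rewrite mulr_sumr Re_sum.
  apply: eq_bigr => k _; apply: eq_bigr => l _.
  have -> : S l k = Num.conj (S k l).
    rewrite /S rmorph_sum; apply: eq_bigr => i _; exact: herm_entry (hP i).1 k l.
  exact: nsqE.
have SXge : \sum_k s k ^+ 2 <= \sum_i \sum_j X i j.
  rewrite SX; apply: ler_sum => k _.
  rewrite (bigD1 k) //= -[s k ^+ 2]addr0; apply: lerD.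
    by rewrite /s -Re_sum; exact: nsq_ge.
  apply: sumr_ge0 => l _; rewrite /nsq; apply: addr_ge0; exact: sqr_ge0.
have Tt : \sum_i t i = \sum_k s k by rewrite /t /s exchange_big.
have sq : \sum_i Num.sqrt (X i i) <= \sum_i t i.
  apply: ler_sum => i _.
  rewrite -(ger0_norm (t0 i)) -sqrtr_sqr; apply: ler_wsqrtr; exact: Xii.
have sq0 : 0 <= \sum_i Num.sqrt (X i i) by apply: sumr_ge0 => i _; exact: sqrtr_ge0.
have main : (\sum_i Num.sqrt (X i i)) ^+ 2 <= d%:R * \sum_i \sum_j X i j.
  apply: (le_trans (y := (\sum_k s k) ^+ 2)).
    by rewrite -Tt !expr2; apply: ler_pM.
  apply: (le_trans (cs s)); apply: ler_wpM2l => //; exact: ler0n.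
have SX0 : 0 <= \sum_i \sum_j X i j.
  by apply: le_trans SXge; apply: sumr_ge0 => k _; exact: sqr_ge0.
have [->|nz] := eqVneq (\sum_i \sum_j X i j) 0.
  by rewrite invr0 mulr0 ler0n.
have pos : 0 < \sum_i \sum_j X i j by rewrite lt_neqAle eq_sym nz SX0.
by rewrite ler_pdivrMr.
Qed.
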